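(* Let $G$ be a finite non-abelian group satisfying condition (Con), and let $L$ be the Laplacian matrix of $\mathcal C_G$. Let $\mathcal F_0,\ldots,\mathcal F_{r-1}$ be the vertex sets of the connected components of the induced subgraph of $\mathcal C_G$ on $G\setminus Z(G)$ (so $r\ge 2$), and for each $i$ let $\lambda_i=|C(u)|$ for any $u\in\mathcal F_i$ (this is independent of the choice of $u$, and $\lambda_i=|\mathcal F_i|+|Z(G)|$). Then the spectrum of $L$, as a multiset, is the union of: $0$ with multiplicity $1$; $|Z(G)|$ with multiplicity $r-1$; for each $i\in\{0,\ldots,r-1\}$, $\lambda_i$ with multiplicity $|\mathcal F_i|-1$ (multiplicities adding when several $\lambda_i$ coincide); and $|G|$ with multiplicity $|Z(G)|$. In particular $L$ has exactly $|G|-1$ nonzero eigenvalues counted with multiplicity, and the largest eigenvalue of $L$ is $|G|$, with multiplicity $|Z(G)|$.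
   Context: For a finite group $G$, the commuting graph $\mathcal C_G$ is the simple undirected graph with vertex set $G$ in which distinct $u,v\in G$ are adjacent iff $uv=vu$. The Laplacian matrix of a simple graph is $L=D-A$ ($A$ adjacency matrix, $D$ diagonal degree matrix). $Z(G)$ is the center of $G$ and $C(v)=\{w\in G: wv=vw\}$ the centralizer of $v$. Condition (Con): for all $u,v\in G\setminus Z(G)$, either $C(u)=C(v)$ or $C(u)\cap C(v)=Z(G)$. *)

(* Defs.v *)
From HB Require Import structures.
From mathcomp Require Import all_boot all_order all_algebra all_fingroup all_solvable.
From mathcomp Require Import algC.
Set Implicit Arguments. Unset Strict Implicit. Unset Printing Implicit Defensive.
Import Order.TTheory GRing.Theory Num.Theory.
Local Open Scope ring_scope.

Section CommGraph.
Local Open Scope group_scope.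
Variables (gT : finGroupType) (G : {group gT}).

(* Vertices of the commuting graph C_G are the elements of G, indexed by
   'I_#|G| through enum_val. *)
Definition cg_vert (i : 'I_#|G|) : gT := @enum_val gT (mem G) i.

Definition cg_adj (i j : 'I_#|G|) : bool :=
  (i != j) && (cg_vert i * cg_vert j == cg_vert j * cg_vert i)%g.

Definition cg_laplacian : 'M[int]_#|G| :=
  \matrix_(i, j) (if i == j then (#|[set k | cg_adj i k]|)%:Z
                  else - ((cg_adj i j : nat)%:Z))%R.

Definition Con : Prop :=
  forall u v, u \in G :\: 'Z(G) -> v \in G :\: 'Z(G) ->
    'C_G[u] = 'C_G[v] \/ 'C_G[u] :&: 'C_G[v] = 'Z(G).

Definition nc_adj : rel gT := fun x y =>
  [&& x \in G :\: 'Z(G), y \in G :\: 'Z(G), x != y & (x * y == y * x)%g].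

Definition nc_components : {set {set gT}} :=
  [set [set y in G :\: 'Z(G) | connect nc_adj x y] | x in G :\: 'Z(G)].

Definition comp_lambda (F : {set gT}) : nat :=
  #|'C_G[odflt 1%g [pick x in F]]|.

End CommGraph.

(* Main.v *)
Require Import Defs.
From HB Require Import structures.
From mathcomp Require Import all_boot all_order all_algebra all_fingroup all_solvable.
From mathcomp Require Import algC.
From mathcomp.algebra_tactics Require Import ring.
Set Implicit Arguments. Unset Strict Implicit. Unset Printing Implicit Defensive.
Import Order.TTheory GRing.Theory Num.Theory.

Local Open Scope ring_scope.
Lemma det_rank (R : comNzRingType) m (A : 'M[R]_m) (h : 'I_m -> nat) :
  (forall i j, i != j -> A i j != 0 -> (h j < h i)%N) ->
  \det A = \prod_i A i i.
Proof.
move=> hA; rewrite /determinant (bigD1 1%g) //= odd_perm1 expr0 mul1r.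
rewrite [X in _ + X]big1 ?addr0; last first.
  move=> s s1.
  have /existsP[i /andP[si hi]]: [exists i, (s i != i) && ~~ (h (s i) < h i)%N].
    apply: contraT => /existsPn H; move/negP: s1; case.
    have Hle i : (h (s i) <= h i)%N.
      by have := H i; rewrite negb_and !negbK; case/orP=> [/eqP->//|]; exact: ltnW.
    have Heq : (\sum_i h (s i) = \sum_i h i)%N.
      by rewrite [RHS](reindex_inj (@perm_inj _ s)).
    apply/eqP/permP => i; rewrite perm1; apply/eqP; apply: contraT => si.
    have := H i; rewrite si /= negbK => hlt.
    have : (\sum_i h (s i) < \sum_i h i)%N.
      rewrite (bigD1 i) //= [X in (_ < X)%N](bigD1 i) //=.
      rewrite -addSn leq_add //; apply: leq_sum => k _; exact: Hle.
    by rewrite Heq ltnn.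
  rewrite (bigD1 i) //= (_ : A i (s i) = 0) ?mul0r ?mulr0 //.
  by apply: contraNeq hi => /hA; apply; rewrite eq_sym.
by apply: eq_bigr => i _; rewrite perm1.
Qed.

Lemma char_poly_sim (R : idomainType) m (L T P : 'M[R]_m) :
  \det P != 0 -> P *m L = T *m P -> char_poly L = char_poly T.
Proof.
move=> dP hPL.
have E : map_mx polyC P *m char_poly_mx L = char_poly_mx T *m map_mx polyC P.
  rewrite /char_poly_mx mulmxBr mulmxBl -!map_mxM hPL.
  by rewrite -scalar_mxC.
have := congr1 determinant E; rewrite !det_mulmx det_map_mx /= mulrC.
apply: mulIf; by rewrite polyC_eq0.
Qed.

Lemma char_poly_rank (R : idomainType) m (T : 'M[R]_m) (h : 'I_m -> nat) :
  (forall i j, i != j -> T i j != 0 -> (h j < h i)%N) ->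
  char_poly T = \prod_i ('X - (T i i)%:P).
Proof.
move=> hT; rewrite /char_poly (det_rank (h := h)).
  by apply: eq_bigr => i _; rewrite !mxE eqxx.
move=> i j ij; rewrite !mxE (negbTE ij) sub0r oppr_eq0 polyC_eq0; exact: hT.
Qed.

Lemma root_pow (R : idomainType) k (c x : R) : root (('X - c%:P) ^+ k) x -> x = c.
Proof.
case: k => [|k]; first by rewrite expr0 rootC oner_eq0.
by rewrite root_exp_XsubC => /eqP.
Qed.

Lemma root_prod_pow (R : idomainType) (I : finType) (S : {pred I}) (c : I -> R) (e : I -> nat) x :
  root (\prod_(F in S) ('X - (c F)%:P) ^+ e F) x -> exists2 F, F \in S & x = c F.
Proof.
rewrite rootE horner_prod => /prodf_eq0 [F FS]; rewrite -rootE => /root_pow ->.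
by exists F.
Qed.

Lemma pow_neq0 (R : idomainType) k (c : R) : ('X - c%:P) ^+ k != 0.
Proof. by rewrite expf_neq0 // polyXsubC_eq0. Qed.

Lemma alg_facts (I : finType) (S : {pred I}) (l e : I -> nat) (z n a b : nat) :
  (0 < z)%N -> (z < n)%N -> (forall F, F \in S -> (0 < l F)%N && (l F < n)%N) ->
  let q : {poly algC} := 'X * ('X - (z%:R)%:P) ^+ a
      * \prod_(F in S) ('X - ((l F)%:R)%:P) ^+ e F * ('X - (n%:R)%:P) ^+ b in
  [/\ mup 0 q = 1%N, (forall x, root q x -> x \is Num.real /\ x <= n%:R) & mup n%:R q = b].
Proof.
move=> z0 zn hl q.
have nP : ~~ root (\prod_(F in S) ('X - ((l F)%:R)%:P) ^+ e F) (0 : algC).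
  apply/negP => /root_prod_pow [F FS] /esym/eqP; rewrite pnatr_eq0.
  by case/andP: (hl F FS); rewrite lt0n => /negbTE ->.
have nPn : ~~ root (\prod_(F in S) ('X - ((l F)%:R)%:P) ^+ e F) (n%:R : algC).
  apply/negP => /root_prod_pow [F FS] /eqP; rewrite eqr_nat.
  by case/andP: (hl F FS) => _; rewrite ltn_neqAle eq_sym => /andP[/negbTE ->].
split.
- rewrite /q mupMl; last first.
    by apply/negP => /root_pow /eqP; rewrite eq_sym pnatr_eq0 gtn_eqF // (ltn_trans z0 zn).
  rewrite mupMl // mupMl; last first.
    by apply/negP => /root_pow /eqP; rewrite eq_sym pnatr_eq0 gtn_eqF.
  by rewrite -{1}(subr0 'X) -[_ - _]expr1 mup_XsubCX eqxx.
- move=> x; rewrite /q !rootM -!orbA => /or4P[|/root_pow ->|/root_prod_pow [F FS ->]|/root_pow ->].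
  + by rewrite rootX => /eqP ->; split; [exact: real0 | exact: ler0n].
  + by split; [exact: realn | rewrite ler_nat ltnW].
  + by split; [exact: realn | rewrite ler_nat; case/andP: (hl F FS) => _ /ltnW].
  + by split; [exact: realn | exact: lexx].
- rewrite /q mupMr ?mup_XsubCX ?eqxx //.
  rewrite !rootM negb_or nPn andbT negb_or rootX pnatr_eq0 gtn_eqF ?(ltn_trans z0 zn) //=.
  by apply/negP => /root_pow /eqP; rewrite eqr_nat => /eqP nz; move: zn; rewrite nz ltnn.
Qed.

Local Close Scope ring_scope.

Section Grp.
Variables (gT : finGroupType) (G : {group gT}).
Hypothesis nab : ~~ abelian G.
Hypothesis hCon : Con G.

Local Open Scope group_scope.

Definition K x := 'C_G[x] :\: 'Z(G).
Definition rep x := if x \in 'Z(G) then 1 else odflt 1 [pick y in K x].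

Lemma ZsubC x : x \in G -> 'Z(G) \subset 'C_G[x].
Proof.
move=> xG; apply/subsetP => y /centerP [yG cy]; rewrite inE yG /=.
by apply/cent1P; exact: cy.
Qed.

Lemma commE x y : x \in G -> y \in G -> (x * y == y * x) = (y \in 'C_G[x]).
Proof.
move=> xG yG; rewrite inE yG /=; apply/eqP/cent1P => h; exact: esym.
Qed.

Lemma CG_sym x y : x \in G -> y \in G -> (y \in 'C_G[x]) = (x \in 'C_G[y]).
Proof. by move=> xG yG; rewrite -commE // -commE // eq_sym. Qed.

Lemma CG_id x : x \in G -> x \in 'C_G[x].
Proof. by move=> xG; rewrite inE xG cent1id. Qed.

Lemma CGZ x : x \in 'Z(G) -> 'C_G[x] = G.
Proof.
move=> xZ; apply/setIidPl/subsetP => y yG; have xG := subsetP (center_sub G) _ xZ.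
have := subsetP (ZsubC yG) _ xZ; rewrite CG_sym //; by case/setIP.
Qed.

Lemma K_sub x : K x \subset G.
Proof. by apply/subsetP => y /setDP [/setIP []]. Qed.

Lemma K_sub_in x y : y \in K x -> y \in G.
Proof. by move/(subsetP (K_sub x)). Qed.

Lemma KP x y : (y \in K x) = (y \in 'C_G[x]) && (y \notin 'Z(G)).
Proof. by rewrite /K inE andbC. Qed.

Lemma CK x y : x \in G :\: 'Z(G) -> y \in K x -> 'C_G[y] = 'C_G[x].
Proof.
move=> xnZ yK; have yG := subsetP (K_sub x) _ yK.
have ynZ : y \in G :\: 'Z(G) by move: yK; rewrite KP => /andP[_ ?]; apply/setDP.
case: (hCon ynZ xnZ) => // hI.
move: yK; rewrite KP => /andP[yC]; rewrite -hI inE yC CG_id //.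
Qed.

Lemma x_in_K x : x \in G :\: 'Z(G) -> x \in K x.
Proof. by move=> /setDP[xG xZ]; rewrite KP CG_id. Qed.

Lemma repK x : x \in G :\: 'Z(G) -> rep x \in K x.
Proof.
move=> xnZ; rewrite /rep (negbTE (setDP xnZ).2).
case: pickP => [y //|/(_ x)]; by rewrite x_in_K.
Qed.

Lemma K_G x : x \in G :\: 'Z(G) -> x \in G. Proof. by case/setDP. Qed.

Lemma K_nZ x y : y \in K x -> y \in G :\: 'Z(G).
Proof. by move=> yK; apply/setDP; split; [exact: (subsetP (K_sub x) _ yK)|move: yK; rewrite KP => /andP[]]. Qed.

Lemma KK x y : x \in G :\: 'Z(G) -> y \in K x -> K y = K x.
Proof. by move=> xnZ yK; rewrite /K (CK xnZ yK). Qed.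

Lemma CG_rep x : x \in G -> 'C_G[rep x] = 'C_G[x].
Proof.
move=> xG; case: (boolP (x \in 'Z(G))) => xZ.
  by rewrite /rep xZ CGZ // CGZ // group1.
by apply: CK (repK _); apply/setDP.
Qed.

Lemma rep_Z x : x \in 'Z(G) -> rep x = 1.
Proof. by rewrite /rep => ->. Qed.

Lemma rep_nZ x : x \in G :\: 'Z(G) -> rep x \in G :\: 'Z(G).
Proof. by move=> h; apply: K_nZ (repK h). Qed.

Lemma K_rep x : x \in G :\: 'Z(G) -> K (rep x) = K x.
Proof. by move=> h; apply: KK (repK h). Qed.

Lemma rep_rep x : x \in G -> rep (rep x) = rep x.
Proof.
move=> xG; case: (boolP (x \in 'Z(G))) => xZ.
  by rewrite rep_Z // rep_Z // group1.
have xnZ : x \in G :\: 'Z(G) by apply/setDP.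
have := rep_nZ xnZ; case/setDP => _ rZ.
by rewrite {1}/rep (negbTE rZ) K_rep // /rep (negbTE xZ).
Qed.

Lemma rep_eqK x y : x \in G :\: 'Z(G) -> y \in G :\: 'Z(G) ->
  (rep x == rep y) = (K x == K y).
Proof.
move=> xnZ ynZ; apply/eqP/eqP => h.
  by rewrite -K_rep // h K_rep.
by rewrite /rep (negbTE (setDP xnZ).2) (negbTE (setDP ynZ).2) h.
Qed.


Lemma exists_nZ : exists x, x \in G :\: 'Z(G).
Proof.
have: G :\: 'Z(G) != set0.
  apply: contra nab; rewrite setD_eq0 => h.
  by apply: subset_trans h _; apply: subsetIr.
by case/set0Pn => x; exists x.
Qed.

Definition u0 := odflt 1 [pick x in G :\: 'Z(G)].
Definition a1 := rep u0.

Lemma u0_nZ : u0 \in G :\: 'Z(G).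
Proof.
rewrite /u0; case: pickP => [x //|h]; have [x hx] := exists_nZ.
by move: (h x); rewrite hx.
Qed.

Lemma a1_nZ : a1 \in G :\: 'Z(G).
Proof. exact: rep_nZ u0_nZ. Qed.

Lemma rep_a1 : rep a1 = a1.
Proof. exact: rep_rep (K_G u0_nZ). Qed.

Lemma conn_K x y : x \in G :\: 'Z(G) -> y \in G :\: 'Z(G) ->
  connect (nc_adj G) x y = (y \in K x).
Proof.
move=> xnZ ynZ; apply/idP/idP.
  pose a := [pred w | (w \in G :\: 'Z(G)) && (K w == K x)].
  have cl : closed (nc_adj G) a.
    move=> u v /and4P[unZ vnZ _ cuv]; rewrite !unfold_in /= unZ vnZ /=.
    have vK : v \in K u by rewrite KP -commE ?K_G // cuv; case/setDP: vnZ.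
    by rewrite (KK unZ vK).
  move=> c; have ha w : (w \in a) = (w \in G :\: 'Z(G)) && (K w == K x) by [].
  have := closed_connect cl c; rewrite !ha xnZ ynZ eqxx /= => /esym/eqP <-.
  exact: x_in_K.
move=> yK; case: (eqVneq x y) => [<-|xy]; first exact: connect0.
apply: connect1; rewrite /nc_adj xnZ ynZ xy /= commE ?K_G //.
by move: yK; rewrite KP => /andP[].
Qed.

Definition Rs := [set x in G :\: 'Z(G) | rep x == x].

Lemma Rs_rep x : x \in G :\: 'Z(G) -> rep x \in Rs.
Proof. by move=> h; apply/setIdP; split; [exact: rep_nZ | rewrite rep_rep ?K_G]. Qed.

Lemma comps_eq : nc_components G = [set K x | x in Rs].
Proof.
rewrite /nc_components; apply/setP => F; apply/imsetP/imsetP => [[x xnZ ->]|[x xR ->]].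
  exists (rep x); first exact: Rs_rep.
  rewrite K_rep //; apply/setP => y; rewrite inE.
  case: (boolP (y \in G :\: 'Z(G))) => ynZ /=; first by rewrite (conn_K xnZ ynZ).
  by apply/esym/negP => /K_nZ; rewrite (negbTE ynZ).
case/setIdP: xR => xnZ _; exists x => //.
apply/esym/setP => y; rewrite inE.
case: (boolP (y \in G :\: 'Z(G))) => ynZ /=; first by rewrite (conn_K xnZ ynZ).
by apply/esym/negP => /K_nZ; rewrite (negbTE ynZ).
Qed.

Lemma K_inj : {in Rs &, injective K}.
Proof.
move=> x y /setIdP[xnZ /eqP rx] /setIdP[ynZ /eqP ry] h.
by rewrite -rx -ry; apply/eqP; rewrite rep_eqK // h.
Qed.

Lemma card_comps : #|nc_components G| = #|Rs|.
Proof. by rewrite comps_eq card_in_imset //; exact: K_inj. Qed.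


Definition cnt x := #|'C_G[x]|.

Lemma cnt_K x : x \in G -> cnt x = #|K x| + #|'Z(G)|.
Proof.
move=> xG; rewrite /K cardsD (setIidPr (ZsubC xG)) subnK //.
exact: subset_leq_card (ZsubC xG).
Qed.

Lemma cnt_rep x : x \in G -> cnt (rep x) = cnt x.
Proof. by move=> xG; rewrite /cnt CG_rep. Qed.

Lemma rep_G x : x \in G -> rep x \in G.
Proof.
move=> xG; case: (boolP (x \in 'Z(G))) => xZ; first by rewrite rep_Z.
by apply: K_G; apply: rep_nZ; apply/setDP.
Qed.

Lemma class_nZ r : r \in Rs -> [set m in G | rep m == r] = K r.
Proof.
case/setIdP => rnZ /eqP rr; apply/setP => m; rewrite inE.
case: (boolP (m \in G)) => mG /=; last first.
  by apply/esym/negP => /K_sub_in; rewrite (negbTE mG).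
case: (boolP (m \in 'Z(G))) => mZ.
  rewrite rep_Z //; apply/esym; rewrite KP mZ andbF.
  by apply/esym/negP => /eqP r1; case/setDP: rnZ => _; rewrite -r1 group1.
have mnZ : m \in G :\: 'Z(G) by apply/setDP.
rewrite -{1}rr rep_eqK //; apply/eqP/idP => [<-|mK]; first exact: x_in_K.
exact: KK.
Qed.

Lemma class_Z : [set m in G | rep m == 1] = 'Z(G).
Proof.
apply/setP => m; rewrite inE; case: (boolP (m \in 'Z(G))) => mZ.
  by rewrite rep_Z // eqxx andbT (subsetP (center_sub G)).
case: (boolP (m \in G)) => mG //=.
have mnZ : m \in G :\: 'Z(G) by apply/setDP.
apply/negP => /eqP r1; have := rep_nZ mnZ; rewrite r1 => /setDP[_]; by rewrite group1.
Qed.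

Lemma sum_Rs : (\sum_(m in Rs) #|K m|)%N = #|G| - #|'Z(G)|.
Proof.
have -> : #|G| - #|'Z(G)| = #|G :\: 'Z(G)|.
  by rewrite cardsD (setIidPr (center_sub G)).
rewrite -sum1_card [RHS](partition_big rep (fun m => m \in Rs)); last by move=> i /Rs_rep.
apply: eq_bigr => m mR; rewrite -(class_nZ mR) sum1dep_card.
suff -> : [set m0 in G | rep m0 == m] = [set x in G :\: 'Z(G) | rep x == m] by [].
apply/setP => x; apply/setIdP/setIdP => [[xG rx]|[/setDP[xG xZ] rx]] //.
split => //; apply/setDP; split => //; apply/negP => xZ.
move: rx; rewrite rep_Z // => /eqP m1; case/setIdP: mR => /setDP[_].
by rewrite -m1 group1.
Qed.


Local Open Scope ring_scope.

Definition ind (b : bool) : int := if b then 1 else 0.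
Definition nn : int := (#|G|)%:R.
Definition zz : int := (#|'Z(G)|)%:R.

Lemma sum_eq a (F : gT -> int) : a \in G -> \sum_(m in G) ind (m == a) * F m = F a.
Proof.
move=> aG; rewrite (bigD1 a) //= eqxx mul1r big1 ?addr0 // => m /andP[_ ma].
by rewrite /ind (negbTE ma) mul0r.
Qed.

Lemma sum_set (A : {set gT}) (F : gT -> int) : A \subset G ->
  \sum_(m in G) ind (m \in A) * F m = \sum_(m in A) F m.
Proof.
move=> sAG; rewrite big_mkcond [RHS]big_mkcond; apply: eq_bigr => m _.
rewrite /ind; case: (boolP (m \in A)) => mA; last by rewrite mul0r; case: ifP.
by rewrite (subsetP sAG m mA) mul1r.
Qed.

Lemma sum_card (A : {set gT}) : A \subset G ->
  \sum_(m in G) ind (m \in A) = (#|A|)%:R.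
Proof.
move=> sAG; rewrite -(eq_bigr _ (fun m _ => mulr1 _)) sum_set //.
by rewrite sumr_const.
Qed.

Lemma sum_set_eq (A : {set gT}) (j k : gT) :
  \sum_(m in A) (ind (j == m) - ind (j == k)) =
  ind (j \in A) - (#|A|)%:R * ind (j == k).
Proof.
rewrite sumrB sumr_const -mulr_natl mulr1; congr (_ - _); last by rewrite mulr_natl.
case: (boolP (j \in A)) => jA.
  rewrite (bigD1 j) //= eqxx big1 ?addr0 // => m /andP[_ mj].
  by rewrite /ind eq_sym (negbTE mj).
by rewrite big1 // => m mA; rewrite /ind; case: eqP => // jm; move: jA; rewrite jm mA.
Qed.

Definition lf (x y : gT) : int := ind (x == y) * (cnt x)%:R - ind (y \in 'C_G[x]).

Definition p1f (k j : gT) : int :=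
  if rep k != k then ind (j == k) - ind (j == rep k)
  else if k == 1%g then ind (j == 1%g)
  else if k == a1 then ind (j == a1)
  else ind (j == k) - ind (j == a1).
Definition pf (k j : gT) : int := if k == a1 then 1 else p1f k j.
Definition tf (k j : gT) : int :=
  if rep k != k then (cnt k)%:R * ind (j == k)
  else if k == 1%g then nn * ind (j == 1%g) - ind (j == a1)
  else if k == a1 then 0
  else zz * ind (j == k) - ind (j \in K k :\ k) + ind (j \in K a1 :\ a1).
Definition wv (j : gT) : int :=
  if rep j != j then 1 else if j == 1%g then zz
  else if j == a1 then nn - zz else (#|K j|)%:R.
Definition wf (k j : gT) : int := if k == a1 then wv j else ind (j == k).

Lemma a1_ne1 : (a1 != 1)%g.
Proof. by apply/eqP => h; have := a1_nZ; rewrite h => /setDP[_]; rewrite group1. Qed.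

Lemma one_ne_a1 : ((1 : gT) != a1)%g.
Proof. by rewrite eq_sym a1_ne1. Qed.

Lemma rep1 : rep 1%g = 1%g.
Proof. by rewrite rep_Z // group1. Qed.

Lemma sum_lin a b (F : gT -> int) : a \in G -> b \in G ->
  \sum_(m in G) (ind (m == a) - ind (m == b)) * F m = F a - F b.
Proof.
by move=> aG bG; rewrite (eq_bigr _ (fun m _ => mulrBl _ _ _)) sumrB !sum_eq.
Qed.


Lemma indC k j : k \in G :\: 'Z(G) -> j \in G ->
  ind (j \in 'C_G[k]) = ind (j \in 'Z(G)) + ind (j \in K k :\ k) + ind (j == k).
Proof.
move=> knZ jG; have kG := K_G knZ.
case: (eqVneq j k) => [->|jk].
  rewrite CG_id // (negbTE (setDP knZ).2) in_setD1 eqxx /ind /=; ring.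
rewrite in_setD1 jk /= KP.
case: (boolP (j \in 'Z(G))) => jZ /=; last by rewrite /ind; case: ifP => _; ring.
by rewrite (subsetP (ZsubC kG) _ jZ) /ind; ring.
Qed.

Lemma cnt_ns k : k \in G :\: 'Z(G) ->
  ((cnt k)%:R : int) = zz + (#|K k :\ k|)%:R + 1.
Proof.
move=> knZ; rewrite cnt_K ?K_G // (cardsD1 k (K k)) x_in_K // /zz.
rewrite (_ : nat_of_bool true = 1%N) // !natrD; ring.
Qed.

Lemma a1_Rs : a1 \in Rs.
Proof. by apply/setIdP; split; [exact: a1_nZ | rewrite rep_a1]. Qed.

Lemma pf_cls k m j : k \in Rs -> m \in K k :\ k ->
  pf m j = ind (j == m) - ind (j == k).
Proof.
move=> kR /setD1P[mk mK].
have : m \in [set m in G | rep m == k] by rewrite class_nZ.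
case/setIdP => mG /eqP rm.
have rmm : rep m != m by rewrite rm eq_sym.
have ma : m != a1 by apply: contraNneq rmm => ->; rewrite rep_a1.
by rewrite /pf (negbTE ma) /p1f rmm rm.
Qed.

Lemma V1 k j : k \in G -> j \in G ->
  \sum_(m in G) pf k m * lf m j = \sum_(m in G) tf k m * pf m j.
Proof.
move=> kG jG; have a1G := K_G a1_nZ; have oG : (1%g : gT) \in G := group1 _.
case: (boolP (rep k != k)) => rk.
  have ka : k != a1 by apply: contraNneq rk => ->; rewrite rep_a1.
  rewrite (eq_bigr (fun m => (ind (m == k) - ind (m == rep k)) * lf m j)); last first.
    by move=> m _; rewrite /pf (negbTE ka) /p1f rk.
  rewrite sum_lin ?rep_G //.
  rewrite (eq_bigr (fun m => ind (m == k) * ((cnt k)%:R * pf m j))); last first.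
    by move=> m _; rewrite /tf rk mulrA [_ * ind _]mulrC.
  rewrite sum_eq // /pf (negbTE ka) /p1f rk /lf CG_rep // cnt_rep //.
  rewrite (eq_sym k j) (eq_sym (rep k) j); ring.
move: rk; rewrite negbK => /eqP rk.
case: (eqVneq k 1%g) => [k1|k1].
  subst k.
  rewrite (eq_bigr (fun m => ind (m == 1%g) * lf m j)); last first.
    by move=> m _; rewrite /pf (negbTE one_ne_a1) /p1f rep1 eqxx.
  rewrite sum_eq //.
  rewrite (eq_bigr (fun m => ind (m == 1%g) * (nn * pf m j) - ind (m == a1) * pf m j)); last first.
    by move=> m _; rewrite /tf rep1 eqxx /=; ring.
  rewrite sumrB !sum_eq // /lf /pf eqxx (negbTE one_ne_a1) /p1f rep1 eqxx /=.
  rewrite /cnt CGZ ?group1 // jG /nn /ind eq_sym; case: ifP => _; ring.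
case: (eqVneq k a1) => [ka|ka].
  subst k.
  rewrite [RHS]big1; last by move=> m _; rewrite /tf rep_a1 eqxx /= (negbTE a1_ne1) ?eqxx mul0r.
  rewrite (eq_bigr (fun m => ind (m == j) * (cnt m)%:R - ind (m \in 'C_G[j]))); last first.
    move=> m mG; rewrite /pf eqxx mul1r /lf CG_sym // eq_sym //.
  rewrite sumrB sum_eq // sum_card; first by rewrite subrr.
  by apply/subsetP => m /setIP[].
have knZ : k \in G :\: 'Z(G).
  apply/setDP; split => //; apply/negP => kZ; move/eqP: k1; apply.
  by rewrite -rk rep_Z.
have kR : k \in Rs by apply/setIdP; split => //; rewrite rk.
rewrite (eq_bigr (fun m => (ind (m == k) - ind (m == a1)) * lf m j)); last first.
  by move=> m _; rewrite /pf (negbTE ka) /p1f rk eqxx /= (negbTE k1) (negbTE ka).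
rewrite sum_lin //.
rewrite (eq_bigr (fun m => ind (m == k) * (zz * pf m j) - ind (m \in K k :\ k) * pf m j
   + ind (m \in K a1 :\ a1) * pf m j)); last first.
  by move=> m _; rewrite /tf rk eqxx /= (negbTE k1) (negbTE ka); ring.
have sub x : K x :\ x \subset G.
  by apply/subsetP => y /setD1P[_ /K_sub_in].
rewrite big_split /= sumrB sum_eq // !sum_set //.
rewrite (eq_bigr (fun m => ind (j == m) - ind (j == k))); last by move=> m /(pf_cls j kR).
rewrite [X in _ = _ + X](eq_bigr (fun m => ind (j == m) - ind (j == a1))); last first.
  by move=> m /(pf_cls j a1_Rs).
rewrite !sum_set_eq /pf (negbTE ka) /p1f rk eqxx /= (negbTE k1) (negbTE ka).
rewrite /lf (indC knZ jG) (indC a1_nZ jG) (cnt_ns knZ) (cnt_ns a1_nZ).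
rewrite (eq_sym k j) (eq_sym a1 j); ring.
Qed.


Definition Aset j := [set m in G | (rep m != m) && (rep m == j)].

Lemma Aset_nrep j : j \in G -> rep j != j -> Aset j = set0.
Proof.
move=> jG rj; apply/setP => m; rewrite in_set0 /Aset; apply/negP => /setIdP[mG /andP[_ /eqP rm]].
by move: rj; rewrite -rm rep_rep // eqxx.
Qed.

Lemma Aset_rep j : rep j = j -> Aset j = [set m in G | rep m == j] :\ j.
Proof.
move=> rj; apply/setP => m; rewrite /Aset.
apply/setIdP/setD1P => [[mG /andP[rm /eqP rmj]]|[mj /setIdP[mG /eqP rmj]]].
  by split; [apply: contraNneq rm => ->; rewrite rj | apply/setIdP; split; rewrite ?rmj].
by split => //; rewrite rmj eq_sym mj eqxx.
Qed.

Definition sf (m j : gT) : int :=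
  if rep m != m then ind (j == rep m)
  else if (m == 1%g) || (m == a1) then 0 else ind (j == a1).

Lemma p1f_sf m j : p1f m j = ind (j == m) - sf m j.
Proof.
rewrite /p1f /sf; case: (rep m != m) => //; case: (eqVneq m 1%g) => [->|m1] /=.
  by rewrite subr0.
by case: (eqVneq m a1) => [->|ma] /=; rewrite ?subr0.
Qed.

Lemma sf_pt m j : m \in G -> wv m * sf m j =
  ind (m \in Aset j) + ind (j == a1) * (ind (m \in Rs :\ a1) * (#|K m|)%:R).
Proof.
move=> mG; rewrite /wv /sf /Aset inE mG /=.
case: (boolP (rep m != m)) => rm /=.
  have mR : m \notin Rs by apply: contra rm => /setIdP[_ ->].
  rewrite in_setD1 (negbTE mR) andbF /ind /= mul0r mulr0 addr0 mul1r.
  by rewrite eq_sym.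
rewrite /ind /= add0r.
case: (eqVneq m 1%g) => [->|m1] /=.
  rewrite mulr0 in_setD1 (_ : (1%g \in Rs) = false) ?andbF ?mul0r ?mulr0 //.
  by apply/negP => /setIdP[/setDP[_]]; rewrite group1.
case: (eqVneq m a1) => [->|ma] /=; first by rewrite mulr0 in_setD1 eqxx /= mul0r mulr0.
have mR : m \in Rs.
  apply/setIdP; split; last by rewrite negbK in rm.
  apply/setDP; split => //; apply/negP => mZ; move: rm; rewrite negbK rep_Z // => /eqP m1'.
  by move: m1; rewrite -m1' eqxx.
by rewrite in_setD1 ma mR /=; case: (j == a1); ring.
Qed.

Lemma sum_Rs_a1 : \sum_(m in Rs :\ a1) ((#|K m|)%:R : int) = nn - zz - (#|K a1|)%:R.
Proof.
have h := sum_Rs; have := (congr1 (fun x : nat => (x%:R : int)) h) => /=.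
rewrite natr_sum (bigD1 a1 a1_Rs) /= natrB; last exact: subset_leq_card (center_sub G).
move=> E; rewrite /nn /zz -E.
rewrite (addrC (#|K a1|%:R)) addrK; apply: eq_bigl => m.
by rewrite in_setD1 andbC.
Qed.

Lemma V2 k j : k \in G -> j \in G ->
  \sum_(m in G) wf k m * p1f m j = pf k j.
Proof.
move=> kG jG; case: (eqVneq k a1) => [->|ka]; last first.
  rewrite (eq_bigr (fun m => ind (m == k) * p1f m j)); last by move=> m _; rewrite /wf (negbTE ka).
  by rewrite sum_eq // /pf (negbTE ka).
rewrite /pf eqxx.
rewrite (eq_bigr (fun m => ind (m == j) * wv m - wv m * sf m j)); last first.
  by move=> m _; rewrite /wf eqxx p1f_sf mulrBr eq_sym /ind; case: ifP => _; ring.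
rewrite sumrB sum_eq // (eq_bigr _ (fun m mG => sf_pt j mG)) big_split /=.
rewrite sum_card; last by apply/subsetP => m /setIdP[].
rewrite -mulr_sumr sum_set; last by apply/subsetP => m /setD1P[_ /setIdP[/K_G]].
rewrite sum_Rs_a1.
case: (boolP (rep j != j)) => rj.
  have ja : j != a1 by apply: contraNneq rj => ->; rewrite rep_a1.
  by rewrite Aset_nrep // cards0 /wv rj /ind (negbTE ja); ring.
move: rj; rewrite negbK => /eqP rj; rewrite Aset_rep //.
case: (eqVneq j 1%g) => [j1|j1].
  subst j; rewrite class_Z /wv rj eqxx /= /ind (negbTE one_ne_a1) /zz.
  rewrite (cardsD1 1%g 'Z(G)) group1 natrD (_ : nat_of_bool true = 1%N) //; ring.
have jnZ : j \in G :\: 'Z(G).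
  apply/setDP; split => //; apply/negP => jZ; move/eqP: j1; apply.
  by rewrite -rj rep_Z.
have jR : j \in Rs by apply/setIdP; split => //; rewrite rj.
rewrite class_nZ //.
have cK : ((#|K j|)%:R : int) = (#|K j :\ j|)%:R + 1.
  by rewrite (cardsD1 j (K j)) x_in_K // natrD addrC.
case: (eqVneq j a1) => [ja|ja].
  subst j; rewrite /wv rj eqxx /= (negbTE a1_ne1) /ind ?eqxx cK; ring.
by rewrite /wv rj eqxx /= (negbTE j1) (negbTE ja) /ind ?(negbTE ja) cK; ring.
Qed.


Definition mkM (f : gT -> gT -> int) : 'M[int]_#|G| :=
  \matrix_(i, j) f (cg_vert i) (cg_vert j).

Lemma vertG (i : 'I_#|G|) : cg_vert i \in G.
Proof. exact: enum_valP. Qed.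

Lemma sum_vert (F : gT -> int) : \sum_(k < #|G|) F (cg_vert k) = \sum_(x in G) F x.
Proof. by rewrite (big_enum_val F). Qed.

Lemma mkM_mul f g i j : (mkM f *m mkM g) i j =
  \sum_(x in G) f (cg_vert i) x * g x (cg_vert j).
Proof.
rewrite mxE -sum_vert; apply: eq_bigr => k _; by rewrite !mxE.
Qed.

Lemma vert_eq (i j : 'I_#|G|) : (cg_vert i == cg_vert j) = (i == j).
Proof. exact: (inj_eq enum_val_inj). Qed.

Lemma card_adj (i : 'I_#|G|) :
  #|[set k | cg_adj i k]| = #|'C_G[cg_vert i] :\ cg_vert i|.
Proof.
rewrite -sum1dep_card big_mkcond /=.
rewrite (eq_bigr (fun k => (fun x => if (x != cg_vert i) && (x \in 'C_G[cg_vert i])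
   then 1%N else 0%N) (cg_vert k))); last first.
  move=> k _ /=; rewrite /cg_adj commE ?vertG // eq_sym vert_eq.
  by rewrite eq_sym.
rewrite -(big_enum_val (fun x => if (x != cg_vert i) && (x \in 'C_G[cg_vert i])
   then 1%N else 0%N)) -big_mkcondr /= sum1dep_card.
suff -> : [set x | (x \in G) && ((x != cg_vert i) && (x \in 'C_G[cg_vert i]))]
  = 'C_G[cg_vert i] :\ cg_vert i by [].
apply/setP => x; rewrite !inE; case: (x \in G); rewrite /= ?andbF //.
Qed.

Lemma lap : cg_laplacian G = mkM lf.
Proof.
apply/matrixP => i j; rewrite !mxE /lf vert_eq.
case: (eqVneq i j) => [<-|ij].
  rewrite card_adj /ind mul1r CG_id ?vertG //.
  rewrite /cnt (cardsD1 (cg_vert i) 'C_G[_]) CG_id ?vertG // natrD natz.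
  by rewrite (_ : nat_of_bool true = 1%N) // natz addrAC subrr add0r.
rewrite /ind mul0r sub0r /cg_adj ij /= commE ?vertG //.
by case: (_ \in _).
Qed.


Lemma PL : mkM pf *m cg_laplacian G = mkM tf *m mkM pf.
Proof. apply/matrixP => i j; rewrite lap !mkM_mul; exact: V1 (vertG i) (vertG j). Qed.

Lemma PW : mkM pf = mkM wf *m mkM p1f.
Proof. apply/matrixP => i j; rewrite mkM_mul mxE; exact/esym/V2/vertG/vertG. Qed.

Lemma ZG_lt : (#|'Z(G)| < #|G|)%N.
Proof.
apply: proper_card; rewrite properEneq center_sub andbT.
apply: contra nab => /eqP ZG; rewrite /abelian -{1}ZG; exact: subsetIr.
Qed.

Lemma det_W : \det (mkM wf) = nn - zz.
Proof.
rewrite (det_rank (h := fun i => nat_of_bool (cg_vert i == a1))); last first.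
  move=> i j ij; rewrite mxE /wf; case: (eqVneq (cg_vert i) a1) => [ia|ia].
    move=> _; rewrite /= ltnS leqn0 eqb0; apply: contra ij => /eqP ja.
    by rewrite -vert_eq ia ja.
  by rewrite /ind vert_eq (eq_sym j i) (negbTE ij) eqxx.
rewrite (eq_bigr (fun i => (fun x => wf x x) (cg_vert i))); last by move=> i _; rewrite mxE.
rewrite -(big_enum_val (fun x => wf x x)) /= (bigD1 a1) ?K_G ?a1_nZ //=.
rewrite big1 ?mulr1; last by move=> x /andP[_ xa]; rewrite /wf (negbTE xa) /ind eqxx.
by rewrite /wf eqxx /wv rep_a1 eqxx /= (negbTE a1_ne1).
Qed.

Definition hP1 (k : gT) : nat :=
  if rep k != k then 2%N else if (k == 1%g) || (k == a1) then 0%N else 1%N.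

Lemma det_P1 : \det (mkM p1f) = 1.
Proof.
rewrite (det_rank (h := fun i => hP1 (cg_vert i))); last first.
  move=> i j ij; rewrite -vert_eq in ij; rewrite mxE /p1f /hP1.
  set x := cg_vert i in ij *; set y := cg_vert j in ij *.
  case: (boolP (rep x != x)) => rx.
    rewrite /ind (eq_sym y x) (negbTE ij) sub0r.
    case: (eqVneq y (rep x)) => [yr|yr]; last by rewrite oppr0 eqxx.
    by move=> _; rewrite yr rep_rep ?vertG // eqxx /=; case: ifP.
  case: (eqVneq x 1%g) => [x1|x1] /=.
    by rewrite /ind -x1 (eq_sym y x) (negbTE ij).
  case: (eqVneq x a1) => [xa|xa] /=.
    by rewrite /ind -xa (eq_sym y x) (negbTE ij).
  rewrite /ind (eq_sym y x) (negbTE ij) sub0r.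
  case: (eqVneq y a1) => [ya|ya]; last by rewrite oppr0 eqxx.
  by move=> _; rewrite ya rep_a1 eqxx /= orbT.
apply: big1 => i _; rewrite mxE /p1f; set x := cg_vert i.
case: ifP => [rx|_].
  by rewrite /ind eqxx (_ : (x == rep x) = false) ?subr0 //; apply/negbTE; rewrite eq_sym.
case: ifP => [/eqP ->|_]; first by rewrite /ind eqxx.
case: ifP => [/eqP ->|xa]; first by rewrite /ind eqxx.
by rewrite /ind eqxx xa subr0.
Qed.

Lemma det_P : \det (mkM pf) != 0.
Proof.
rewrite PW det_mulmx det_W det_P1 mulr1 subr_eq0 /nn /zz eqr_nat.
by rewrite eq_sym neq_ltn ZG_lt.
Qed.


Lemma cls_rep k m : k \in Rs -> m \in K k :\ k -> rep m = k /\ rep m != m.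
Proof.
move=> kR /setD1P[mk mK].
have : m \in [set m in G | rep m == k] by rewrite class_nZ.
by case/setIdP => mG /eqP rm; rewrite rm eq_sym.
Qed.

Lemma Rs_of k : k \in G -> rep k = k -> k != 1%g -> k \in Rs.
Proof.
move=> kG rk k1; apply/setIdP; split; last by rewrite rk.
apply/setDP; split => //; apply/negP => kZ; move/eqP: k1; apply.
by rewrite -rk rep_Z.
Qed.

Definition hT (k : gT) : nat := if (rep k != k) || (k == a1) then 0%N else 1%N.

Lemma charL : char_poly (cg_laplacian G) = \prod_(x in G) ('X - (tf x x)%:P).
Proof.
rewrite (char_poly_sim det_P PL) (char_poly_rank (h := fun i => hT (cg_vert i))).
  rewrite (eq_bigr (fun i => (fun x => 'X - (tf x x)%:P) (cg_vert i))); last first.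
    by move=> i _; rewrite mxE.
  by rewrite -(big_enum_val (fun x => 'X - (tf x x)%:P)).
move=> i j ij; rewrite -vert_eq in ij; rewrite mxE /tf /hT.
set x := cg_vert i in ij *; set y := cg_vert j in ij *.
case: (boolP (rep x != x)) => rx.
  by rewrite /ind (eq_sym y x) (negbTE ij) mulr0 eqxx.
move: rx; rewrite negbK => /eqP rx.
case: (eqVneq x 1%g) => [x1|x1] /=.
  rewrite /ind -x1 (eq_sym y x) (negbTE ij) mulr0 sub0r.
  case: (eqVneq y a1) => [ya|ya]; last by rewrite oppr0 eqxx.
  by move=> _; rewrite ya rep_a1 eqxx /= x1 (negbTE one_ne_a1).
case: (eqVneq x a1) => [xa|xa] /=; first by [].
have xR : x \in Rs by apply: Rs_of => //; exact: vertG.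
rewrite /ind (eq_sym y x) (negbTE ij) mulr0 sub0r.
case: (boolP (y \in K x :\ x)) => yK.
  by move=> _; have [_ ->] := cls_rep xR yK.
case: (boolP (y \in K a1 :\ a1)) => yA.
  by move=> _; have [_ ->] := cls_rep a1_Rs yA.
by rewrite oppr0 add0r eqxx.
Qed.


Lemma tf_Z x : x \in 'Z(G) -> tf x x = nn.
Proof.
move=> xZ; rewrite /tf rep_Z //; case: (eqVneq x 1%g) => [->|x1].
  by rewrite eqxx /= /ind (negbTE one_ne_a1) mulr1 subr0.
by rewrite /= /ind eqxx mulr1 /cnt CGZ.
Qed.

Lemma tf_cls m x : m \in Rs -> x \in K m :\ m -> tf x x = (cnt m)%:R.
Proof.
move=> mR xK; have [rx nx] := cls_rep mR xK.
rewrite /tf nx /ind eqxx mulr1 -rx cnt_rep //.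
by case/setD1P: xK => _ /K_sub_in.
Qed.

Lemma tf_R m : m \in Rs -> tf m m = if m == a1 then 0 else zz.
Proof.
move=> mR; have /setIdP[mnZ /eqP rm] := mR.
have m1 : m != 1%g by apply: contraTneq mnZ => ->; rewrite inE group1.
rewrite /tf rm eqxx /= (negbTE m1).
case: (eqVneq m a1) => // ma.
rewrite /ind in_setD1 eqxx /= mulr1.
case: (boolP (m \in K a1 :\ a1)) => mA; last by rewrite subr0 addr0.
by have [h _] := cls_rep a1_Rs mA; move: ma; rewrite -h rm eqxx.
Qed.

Lemma charL_eq : \prod_(x in G) ('X - (tf x x)%:P) =
  'X * ('X - ((#|'Z(G)|)%:Z)%:P) ^+ (#|Rs|.-1)
  * (\prod_(m in Rs) ('X - ((cnt m)%:Z)%:P) ^+ (#|K m|.-1))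
  * ('X - ((#|G|)%:Z)%:P) ^+ #|'Z(G)|.
Proof.
rewrite (bigID (fun x => x \in 'Z(G))) /=.
have -> : \prod_(x in G | x \in 'Z(G)) ('X - (tf x x)%:P) = ('X - ((#|G|)%:Z)%:P) ^+ #|'Z(G)|.
  rewrite -prodr_const; apply: eq_big => x.
    by apply/andP/idP => [[]//|xZ]; split => //; exact: (subsetP (center_sub G)).
  by case/andP => _ xZ; rewrite tf_Z // /nn natz.
rewrite (eq_bigl (fun x => x \in G :\: 'Z(G))); last first.
  by move=> x; rewrite in_setD andbC.
rewrite (partition_big rep (fun m => m \in Rs)); last by move=> i /Rs_rep.
rewrite (eq_bigr (fun m => ('X - (tf m m)%:P) * ('X - ((cnt m)%:Z)%:P) ^+ (#|K m|.-1))); last first.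
  move=> m mR; rewrite (eq_bigl (fun x => x \in K m)); last first.
    move=> x; rewrite -(class_nZ mR) inE.
    apply/andP/andP => [[/setDP[]]//|[xG rx]]; split => //; apply/setDP; split => //.
    apply/negP => xZ; move: rx; rewrite rep_Z // => /eqP m1.
    by case/setIdP: mR => /setDP[_]; rewrite -m1 group1.
  have mK : m \in K m by apply: x_in_K; case/setIdP: mR.
  rewrite (bigD1 m) //=; congr (_ * _).
  rewrite (cardsD1 m (K m)) mK /= -prodr_const; apply: eq_big => x.
    by rewrite in_setD1 andbC.
  by move=> /andP[xK xm]; rewrite (tf_cls mR) ?in_setD1 ?xm // natz.
rewrite big_split /= (bigD1 a1 a1_Rs) /= tf_R ?a1_Rs // eqxx subr0.
rewrite (eq_bigr (fun m => 'X - ((#|'Z(G)|)%:Z)%:P)); last first.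
  by move=> m /andP[mR ma]; rewrite tf_R // (negbTE ma) /zz natz.
rewrite (eq_bigl (fun m => m \in Rs :\ a1)); last by move=> m; rewrite in_setD1 andbC.
rewrite prodr_const (cardsD1 a1 Rs) a1_Rs /=.
ring.
Qed.


Lemma comp_lambda_K m : m \in Rs -> comp_lambda G (K m) = cnt m.
Proof.
case/setIdP => /setDP[_ mZ] /eqP rm.
rewrite /comp_lambda (_ : odflt 1%g [pick x in K m] = m) //.
by rewrite -{2}rm /rep (negbTE mZ).
Qed.

Lemma prod_comps :
  \prod_(F in nc_components G) ('X - ((comp_lambda G F)%:Z)%:P) ^+ (#|F|.-1)
  = \prod_(m in Rs) ('X - ((cnt m)%:Z)%:P) ^+ (#|K m|.-1).
Proof.
rewrite comps_eq big_imset; last exact: K_inj.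
by apply: eq_bigr => m mR; rewrite comp_lambda_K.
Qed.

Lemma cnt_lt m : m \in G :\: 'Z(G) -> (cnt m < #|G|)%N.
Proof.
move=> mnZ; apply: proper_card; rewrite properEneq subsetIl andbT.
apply/eqP => h; case/setDP: mnZ => mG /negP; apply.
apply/centerP; split => // y yG.
have : y \in 'C_G[m] by rewrite h.
by case/setIP => _ /cent1P.
Qed.

Lemma lambda_bounds F : F \in nc_components G ->
  (0 < comp_lambda G F)%N && (comp_lambda G F < #|G|)%N.
Proof.
rewrite comps_eq => /imsetP[m mR ->]; rewrite comp_lambda_K //.
rewrite cardG_gt0 /=; apply: cnt_lt; by case/setIdP: mR.
Qed.

End Grp.

Local Open Scope ring_scope.

Theorem theorem2p9 (gT : finGroupType) (G : {group gT}) :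
  ~~ abelian G -> Con G ->
  let L := cg_laplacian G in
  let Z := 'Z(G)%g in
  let r := #|nc_components G| in
  char_poly L =
    'X * ('X - (#|Z|%:Z)%:P) ^+ r.-1
    * (\prod_(F in nc_components G) ('X - ((comp_lambda G F)%:Z)%:P) ^+ (#|F|.-1))
    * ('X - (#|G|%:Z)%:P) ^+ #|Z|
  /\ mup (0 : algC) (map_poly intr (char_poly L)) = 1%N
  /\ (forall x : algC, root (map_poly intr (char_poly L)) x ->
        x \is Num.real /\ x <= (#|G|)%:R)
  /\ mup ((#|G|)%:R : algC) (map_poly intr (char_poly L)) = #|Z|.
Proof.
move=> nab hCon L Z r.
have E : char_poly L =
    'X * ('X - (#|Z|%:Z)%:P) ^+ r.-1
    * (\prod_(F in nc_components G) ('X - ((comp_lambda G F)%:Z)%:P) ^+ (#|F|.-1))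
    * ('X - (#|G|%:Z)%:P) ^+ #|Z|.
  rewrite /L /Z /r charL // charL_eq // prod_comps // card_comps //.
have M : map_poly intr (char_poly L) =
    'X * ('X - ((#|Z|)%:R)%:P) ^+ r.-1
    * (\prod_(F in nc_components G) ('X - ((comp_lambda G F)%:R)%:P) ^+ (#|F|.-1))
    * ('X - ((#|G|)%:R)%:P) ^+ #|Z| :> {poly algC}.
  rewrite E !rmorphM !rmorphXn rmorph_prod /= map_polyX !map_polyXsubC /= !pmulrn.
  congr (_ * _ * _ * _); apply: eq_bigr => F _.
  by rewrite rmorphXn /= map_polyXsubC /= pmulrn.
have [h1 h2 h3] := @alg_facts _ (nc_components G) (comp_lambda G) (fun F => #|F|.-1)
  #|Z| #|G| r.-1 #|Z| (cardG_gt0 'Z(G)) (ZG_lt nab) (lambda_bounds hCon).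
by rewrite M; split => //; split.
Qed.
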